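(* Let $G$ be a finite group and $p$ a prime. If $|G'\cap Z(G)|=p$ and $C_G(G')$ is non-abelian, then there is a positive integer $s$ such that $C_G(G')/Z(C_G(G'))\cong (C_p\times C_p)^s$ and $$\Pr(C_G(G'))=\frac{1}{p}\left(1+\frac{p-1}{p^{2s}}\right).$$
   Context: $G'$ is the commutator subgroup, $Z(\cdot)$ the center, $C_G(G')$ the centralizer of $G'$ in $G$. For a finite group $H$, $\Pr(H)=\frac{|\{(x,y)\in H\times H : xy=yx\}|}{|H|^2}$. $(C_p\times C_p)^s$ is the direct product of $s$ copies of $C_p\times C_p$. *)

(* Defs.v *)
From HB Require Import structures.
From mathcomp Require Import all_boot all_order all_algebra all_fingroup all_solvable.
Set Implicit Arguments. Unset Strict Implicit. Unset Printing Implicit Defensive.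

Definition Cp_type (p : nat) : finGroupType := 'Z_p.

Definition CpCp_pow_type (p s : nat) : finGroupType :=
  {dffun forall i : 'I_s, (Cp_type p * Cp_type p)%type}.

Definition CpCp_pow (p s : nat) : {group CpCp_pow_type p s} := [set: CpCp_pow_type p s]%G.

Definition comm_prob (gT : finGroupType) (H : {set gT}) : rat :=
  (#|[set xy in setX H H | (xy.1 * xy.2 == xy.2 * xy.1)%g]|%:R / (#|H| ^ 2)%:R)%R.

(* Main.v *)
Require Import Defs.
From HB Require Import structures.
From mathcomp Require Import all_boot all_order all_algebra all_fingroup all_solvable.
From mathcomp Require Import ring.
Set Implicit Arguments. Unset Strict Implicit. Unset Printing Implicit Defensive.

Module Aux.
Open Scope group_scope.
Section Idx.
Variables (gT : finGroupType) (p : nat) (Z0 H : {group gT}).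
Hypotheses (pr_p : prime p) (oZ0 : #|Z0| = p)
  (sH'Z : H^`(1) \subset Z0) (cZH : Z0 \subset 'C(H)).

Lemma comm_inH' y z : y \in H -> z \in H -> [~ y, z] \in H^`(1).
Proof. by move=> Hy Hz; rewrite derg1 mem_commg. Qed.

Lemma comm_inZ0 y z : y \in H -> z \in H -> [~ y, z] \in Z0.
Proof. by move=> Hy Hz; apply: (subsetP sH'Z); apply: comm_inH'. Qed.

Lemma Z0_comm c h : c \in Z0 -> h \in H -> commute c h.
Proof. by move=> Zc Hh; apply: (centP (subsetP cZH _ Zc)). Qed.

Lemma index_cent1 (K : {group gT}) y :
  K \subset H -> y \in H -> ~~ (K \subset 'C[y]) -> #|K : 'C_K[y]| = p.
Proof.
move=> sKH Hy nKy.
pose f z := [~ y, z].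
have fM : {in K &, {morph f : a b / a * b}}.
  move=> a b Ka Kb; rewrite /f commgMJ.
  have Hb := subsetP sKH b Kb; have Ha := subsetP sKH a Ka.
  have c1 : [~ y, a] \in Z0 := comm_inZ0 Hy Ha.
  have c2 : [~ y, b] \in H := subsetP (der_sub 1 H) _ (comm_inH' Hy Hb).
  have -> : [~ y, a] ^ b = [~ y, a] by apply/conjg_fixP/commgP; apply: Z0_comm.
  by rewrite (Z0_comm c1 c2).
pose fm := Morphism fM.
have sfK : fm @* K \subset Z0.
  apply/subsetP=> _ /morphimP[z _ Kz ->]; exact: comm_inZ0 (subsetP sKH z Kz).
have ker : 'C_K[y] = 'ker fm.
  apply/setP=> z; rewrite inE (sameP cent1P commgP) !inE.
  by rewrite -invg_comm eq_invg_mul mulg1.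
have eK : #|fm @* K| = #|K : 'C_K[y]| by rewrite card_morphim setIid -ker.
have : #|fm @* K| %| p by rewrite -oZ0 cardSg.
rewrite eK; apply/(prime_nt_dvdP pr_p).
rewrite indexg_eq1; apply: contra nKy => sKC.
by apply: subset_trans sKC (subsetIr _ _).
Qed.
End Idx.
Lemma mid_index (gT : finGroupType) (A B D : {group gT}) b :
  A \subset B -> B \subset D -> prime #|D : A| -> b \in B -> b \notin A ->
  D \subset B.
Proof.
move=> sAB sBD pr bB bA.
have eL := Lagrange_index sBD sAB.
have nt : #|B : A| != 1%N.
  rewrite indexg_eq1; apply/negP => sBA; by rewrite (subsetP sBA b bB) in bA.
have dv : #|B : A| %| #|D : A| by rewrite -eL dvdn_mull.
have eBA := (prime_nt_dvdP pr nt dv).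
rewrite -indexg_eq1; apply/eqP.
have pos : 0 < #|B : A| by rewrite indexg_gt0.
by apply/eqP; rewrite -(eqn_pmul2r pos) mul1n eL eBA.
Qed.

Lemma even_index (gT : finGroupType) (p : nat) (Z0 : {group gT}) :
  prime p -> #|Z0| = p ->
  forall H : {group gT}, H^`(1) \subset Z0 -> Z0 \subset 'C(H) ->
  exists n, #|H : 'Z(H)| = (p ^ (2 * n))%N.
Proof.
move=> pr_p oZ0 H.
have [m leHm] := ubnP #|H|; elim: m H leHm => // m IHm H leHm sH'Z cZH.
have [abH | nabH] := boolP (abelian H).
  by exists 0%N; rewrite (center_idP abH) indexgg.
have [x Hx nxC] := subsetPn nabH.
have nHx : ~~ (H \subset 'C[x]) by rewrite sub_cent1.
have [y Hy nyx] := subsetPn nHx.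
pose K := 'C_H[x].
have sKH : K \subset H := subsetIl _ _.
have iHK : #|H : K| = p := index_cent1 pr_p oZ0 sH'Z cZH (subxx H) Hx nHx.
have xK : x \in K by rewrite inE Hx cent1id.
have nKy : ~~ (K \subset 'C[y]).
  apply/subsetPn; exists x => //; by rewrite cent1C.
pose R := 'C_K[y].
have sRK : R \subset K := subsetIl _ _.
have sRH := subset_trans sRK sKH.
have iKR : #|K : R| = p := index_cent1 pr_p oZ0 sH'Z cZH sKH Hy nKy.
have xR : x \notin R by rewrite inE xK cent1C.
have yK : y \notin K by rewrite inE Hy.
have sZR : 'Z(H) \subset R.
  apply/subsetP=> z /centerP[Hz cz]; rewrite !in_setI Hz /=.
  by apply/andP; split; apply/cent1P; apply: cz.
have eZ : 'Z(R) = 'Z(H).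
  apply/eqP; rewrite eqEsubset; apply/andP; split; last first.
    apply/subsetP=> z Zz; apply/centerP; split; first exact: subsetP sZR z Zz.
    move=> w Rw; move/centerP: Zz => [_ cz]; exact: cz (subsetP sRH w Rw).
  apply/subsetP=> z /centerP[Rz cz].
  have Hz := subsetP sRH z Rz.
  have sRC : R \subset 'C_K[z].
    by apply/subsetP=> w Rw; rewrite in_setI (subsetP sRK w Rw) /=; apply/cent1P/esym/cz.
  have pK : prime #|K : R| by rewrite iKR.
  have xC : x \in 'C_K[z].
    rewrite in_setI xK /=; apply/cent1P; apply/esym.
    by have /setIP[_ /cent1P] := subsetP sRK z Rz.
  have sKC : K \subset 'C_K[z] := mid_index sRC (subsetIl _ _) pK xC xR.
  have sKC' : K \subset 'C_H[z].
    apply/subsetP=> w Kw; rewrite in_setI (subsetP sKH w Kw).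
    by have /setIP[_ ->] := subsetP sKC w Kw.
  have yC : y \in 'C_H[z].
    rewrite in_setI Hy /=; apply/cent1P; apply/esym.
    by have /setIP[_ /cent1P] := Rz.
  have pH : prime #|H : K| by rewrite iHK.
  have sHC := mid_index sKC' (subsetIl _ _) pH yC yK.
  apply/centerP; split=> // w Hw.
  by have /setIP[_ /cent1P /esym] := subsetP sHC w Hw.
have ltRH : #|R| < #|H|.
  apply: proper_card; apply/properP; split=> //; exists y => //.
  by apply: contra yK; apply: (subsetP sRK).
have [n en] : exists n, #|R : 'Z(R)| = (p ^ (2 * n))%N.
  apply: IHm.
  - by apply: leq_trans ltRH _.
  - by apply: subset_trans (dergS 1 sRH) sH'Z.
  - by apply: subset_trans cZH (centS sRH).
exists n.+1.
rewrite -(Lagrange_index sKH (subset_trans sZR sRK)) -(Lagrange_index sRK sZR).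
have eZ' : #|R : 'Z(H)| = (p ^ (2 * n))%N by rewrite -eZ.
by rewrite eZ' iHK iKR mulnS expnD [in RHS]expnS expn1 mulnA.
Qed.
Lemma card_Cp p : prime p -> #|Cp_type p| = p.
Proof. by move=> pr; rewrite /Cp_type card_ord Zp_cast // prime_gt1. Qed.

Lemma Cp_expp p (a : Cp_type p) : prime p -> a ^+ p = 1.
Proof.
move=> pr; have := expg_cardG (in_setT a); by rewrite cardsT card_Cp.
Qed.

Lemma pair_expg (g1 g2 : finGroupType) (u : g1 * g2) n : u ^+ n = (u.1 ^+ n, u.2 ^+ n).
Proof.
elim: n => [|n IH]; first by case: u.
by rewrite !expgS IH.
Qed.

Lemma card_CpCp p s : prime p -> #|CpCp_pow p s| = (p ^ (2 * s))%N.
Proof.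
move=> pr; rewrite /CpCp_pow /= cardsT /CpCp_pow_type card_ffun card_prod card_Cp //.
by rewrite card_ord expnM mulnn.
Qed.

Lemma abelem_CpCp p s : prime p -> p.-abelem (CpCp_pow p s).
Proof.
move=> pr; apply/abelemP => //; split.
  apply/centsP => x _ y _; apply/ffunP => i; rewrite !mulg_ffun.
  case: (x i) => a b; case: (y i) => c d.
  have -> : (a, b) * (c, d) = (a * c, b * d) by []. have -> : (c, d) * (a, b) = (c * a, d * b) by [].
  by congr pair; apply: Zp_mulgC.
  move=> x _; apply/ffunP => i; rewrite oneg_ffun.
  have ffX : forall n, (x ^+ n) i = (x i) ^+ n.
    elim=> [|n IH]; first by rewrite oneg_ffun.
    by rewrite !expgS mulg_ffun IH.
  by rewrite ffX pair_expg !Cp_expp.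
Qed.
Lemma commpairs (gT : finGroupType) (H : {group gT}) :
  #|[set xy in setX H H | xy.1 * xy.2 == xy.2 * xy.1]| = (\sum_(x in H) #|'C_H[x]|)%N.
Proof.
rewrite -sum1dep_card.
rewrite (eq_bigl (fun u => (u.1 \in H) && ((u.2 \in H) && (u.1 * u.2 == u.2 * u.1)))); last first.
  by move=> [a b]; rewrite inE /= andbA.
transitivity (\sum_(x in H) \sum_(y | (y \in H) && (x * y == y * x)%g) 1%N).
  by rewrite pair_big_dep.
apply: eq_bigr => x Hx; rewrite sum1dep_card; apply: eq_card => y.
rewrite inE [in RHS]in_setI; congr (_ && _); apply/eqP/cent1P => [e|e]; by rewrite /commute e.
Qed.
End Aux.
Import Aux.
Import GRing.Theory Num.Theory.

Theorem lemma3p1 (gT : finGroupType) (G : {group gT}) (p : nat) :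
  prime p ->
  #|(G^`(1) :&: 'Z(G))%g| = p ->
  ~~ abelian ('C_G(G^`(1)))%g ->
  exists2 s : nat, 0 < s &
    (('C_G(G^`(1)) / 'Z('C_G(G^`(1))))%g \isog CpCp_pow p s) /\
    comm_prob ('C_G(G^`(1)))%g =
      (1 / p%:R * (1 + (p%:R - 1) / (p%:R ^+ (2 * s))) : rat)%R.
Proof.
move=> pr_p oZ0 nabC.
set C := 'C_G(G^`(1)).
set Z0 := G^`(1) :&: 'Z(G).
have sCG : C \subset G := subsetIl _ _.
have sG'CC : G^`(1) \subset 'C(C) by rewrite centsC subsetIr.
have sZ0G' : Z0 \subset G^`(1) := subsetIl _ _.
have sZ0Z : Z0 \subset 'Z(G) := subsetIr _ _.
have cZ0C : Z0 \subset 'C(C).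
  apply: subset_trans sZ0Z _; apply: subset_trans (subsetIr _ _) _; exact: centS.
have sZ0C : Z0 \subset C.
  rewrite subsetI (subset_trans sZ0Z (center_sub G)) /=.
  by apply: subset_trans sZ0Z _; apply: subset_trans (subsetIr _ _) _; apply: centS (der_sub 1 G).
have sCG' : [~: C, G] \subset G^`(1) by rewrite derg1 commgSS.
have sC'Z0 : C^`(1) \subset Z0.
  rewrite subsetI (dergS 1 sCG) /=.
  have t1 : [~: C, G, C] = 1.
    by apply/commG1P; apply: subset_trans sCG' sG'CC.
  have t2 : [~: G, C, C] = 1 by rewrite (commGC G C).
  have t3 := three_subgroup t1 t2.
  rewrite /= derg1 /center subsetI.
  apply/andP; split; first by apply: subset_trans (commgSS sCG sCG) _; rewrite -derg1 der_sub.
  exact/commG1P.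
have [n en] := even_index pr_p oZ0 sC'Z0 cZ0C.
have sZ0ZC : Z0 \subset 'Z(C) by rewrite subsetI sZ0C.
have n_gt0 : 0 < n.
  move: en; case: n => // /eqP; rewrite muln0 expn0 indexg_eq1 => sCZ.
  by case/negP: nabC; apply: subset_trans sCZ (subsetIr _ _).
have nZC : C \subset 'N('Z(C)) := normal_norm (center_normal _).
have oQ : #|C / 'Z(C)| = (p ^ (2 * n))%N by rewrite card_quotient.
have abelQ : p.-abelem (C / 'Z(C)).
  apply/abelemP=>//; split.
    by apply: sub_der1_abelian; apply: subset_trans sC'Z0 sZ0ZC.
  move=> _ /morphimP[x Nx Cx ->]; rewrite -morphX //; apply: coset_id.
  apply/centerP; split; first by rewrite groupX.
  move=> w Cw; apply/commgP.
  have cZ : [~ x, w] \in Z0 by apply: (subsetP sC'Z0); rewrite derg1 mem_commg.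
  rewrite commXg; last first.
    apply/esym; apply: (centP (subsetP cZ0C _ cZ)) Cx.
  by rewrite -oZ0 expg_cardG.
exists n => //; split.
  by rewrite (isog_abelem_card _ abelQ) abelem_CpCp // card_CpCp // oQ eqxx.
rewrite /comm_prob commpairs.
have hc : #|C| = (#|'Z(C)| * p ^ (2 * n))%N.
  by rewrite -en Lagrange ?center_sub.
have hsum : (p * \sum_(x in C) #|'C_C[x]|)%N =
    (#|'Z(C)| * (p * #|C|) + (#|C| - #|'Z(C)|) * #|C|)%N.
  rewrite big_distrr /= (bigID (fun x => x \in 'Z(C))) /=.
  rewrite (eq_bigr (fun _ => p * #|C|)%N); last first.
    move=> x /andP[Cx Zx]; rewrite (setIidPl _) //.
    by rewrite sub_cent1; move: Zx; rewrite in_setI => /andP[].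
  rewrite [X in (_ + X)%N](eq_bigr (fun _ => #|C|)); last first.
    move=> x /andP[Cx nZx].
    have nCx : ~~ (C \subset 'C[x]).
      by rewrite sub_cent1; apply: contra nZx => cx; rewrite in_setI Cx.
    have iC := index_cent1 pr_p oZ0 sC'Z0 cZ0C (subxx _) Cx nCx.
    by rewrite -{1}iC mulnC Lagrange // subsetIl.
  rewrite !sum_nat_const.
  have e1 : #|(fun i : gT => (i \in C) && (i \in 'Z(C)))| = #|'Z(C)|.
    transitivity #|C :&: 'Z(C)|; first by apply: eq_card => i; rewrite in_setI.
    by rewrite (setIidPr (center_sub _)).
  have e2 : #|(fun i : gT => (i \in C) && (i \notin 'Z(C)))| = (#|C| - #|'Z(C)|)%N.
    transitivity #|C :\: 'Z(C)|; first by apply: eq_card => i; rewrite in_setD andbC.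
    by rewrite cardsDS // center_sub.
  by rewrite e1 e2.
move: hsum hc; rewrite -/C.
set N := (\sum_(x in C) _)%N => hsum hc.
have zpos : (0 < #|'Z(C)|)%N by apply: cardG_gt0.
have ppos : (0 < p)%N by apply: prime_gt0.
have zc : (#|'Z(C)| <= #|C|)%N by apply: subset_leq_card; apply: center_sub.
have hR : (p%:R * N%:R = #|'Z(C)|%:R * (p%:R * #|C|%:R) + (#|C|%:R - #|'Z(C)|%:R) * #|C|%:R :> rat)%R.
  by rewrite -natrM hsum natrD !natrM natrB.
have pnz : (p%:R != 0 :> rat)%R by rewrite pnatr_eq0 -lt0n.
have znz : (#|'Z(C)|%:R != 0 :> rat)%R by rewrite pnatr_eq0 -lt0n.
have NE : (N%:R = (#|'Z(C)|%:R * (p%:R * #|C|%:R) + (#|C|%:R - #|'Z(C)|%:R) * #|C|%:R) / p%:R :> rat)%R.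
  by rewrite -hR [(p%:R * _)%R]mulrC mulfK.
have qnz : ((p%:R : rat) ^+ (2 * n) != 0)%R by rewrite expf_neq0.
rewrite NE hc natrX natrM natrX.
field.
by rewrite pnz znz qnz.
Qed.
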